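(* Let $k\ge 2$ and $n\ge 3$ be integers and $\ell\ge 0$. Let ${\sf S}^{(c)}_k(n,\ell)$ denote the number of circular $k$-noncrossing RNA structures on $\{1,\dots,n\}$ with exactly $\ell$ isolated vertices, ${\sf S}^{(c)}_k(n)=\sum_\ell {\sf S}^{(c)}_k(n,\ell)$, and $f_k(m,\ell)$ the number of $k$-noncrossing digraphs on $\{1,\dots,m\}$ with exactly $\ell$ isolated vertices ($f_k(m,\ell)=0$ if $\ell>m$). Then $$ {\sf S}^{(c)}_k(n,\ell)=\sum_{b=0}^{\lfloor (n-\ell)/2\rfloor}(-1)^b\left[\binom{(n-2)-(b-1)}{b-1}+\binom{n-b}{b}\right]f_k(n-2b,\ell), $$ and $$ {\sf S}^{(c)}_k(n)=\sum_{b=0}^{\lfloor n/2\rfloor}(-1)^b\left[\binom{(n-2)-(b-1)}{b-1}+\binom{n-b}{b}\right]\left\{\sum_{\ell=0}^{n-2b}f_k(n-2b,\ell)\right\}, $$ where $\binom{m}{-1}:=0$ and $\binom{m}{r}:=0$ if $0\le m<r$.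
   Context: A digraph on $\{1,\dots,n\}$ is a set of arcs $(i,j)$ with $1\le i<j\le n$. It is $k$-noncrossing if every vertex lies in at most one arc and there are no $k$ arcs $(i_1,j_1),\dots,(i_k,j_k)$ with $i_1<\dots<i_k<j_1<\dots<j_k$. A vertex is isolated if it lies in no arc. A circular $k$-noncrossing RNA structure on $\{1,\dots,n\}$ is a $k$-noncrossing digraph containing no arc of the form $(i,i+1)$, $1\le i\le n-1$, and no arc $(1,n)$ (i.e. no $1$-arc with indices taken modulo $n$). *)

(* Defs.v *)
From mathcomp Require Import all_boot all_order all_algebra.
Set Implicit Arguments. Unset Strict Implicit. Unset Printing Implicit Defensive.
Import GRing.Theory Num.Theory.

(* Vertices {1,...,n} are represented by 'I_n (vertex v+1 <-> ordinal v).
   A graph on {1..n} is a finite set of arcs (pairs of vertices). *)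
Definition arc n := ('I_n * 'I_n)%type.

Definition is_digraph n (G : {set arc n}) : bool :=
  [forall a in G, (a.1 < a.2)%N].

Definition deg_le1 n (G : {set arc n}) : bool :=
  [forall a in G, forall b in G, (a != b) ==>
     [&& a.1 != b.1, a.1 != b.2, a.2 != b.1 & a.2 != b.2]].

(* there exist k arcs (i_1,j_1),...,(i_k,j_k) of G with
   i_1 < ... < i_k < j_1 < ... < j_k *)
Definition has_k_crossing n k (G : {set arc n}) : bool :=
  [exists f : {ffun 'I_k -> arc n},
    [forall t, f t \in G] &&
    [forall s : 'I_k, forall t : 'I_k,
       [&& (s < t)%N ==> ((f s).1 < (f t).1)%N && ((f s).2 < (f t).2)%N
         & ((f s).1 < (f t).2)%N]]].

Definition k_noncrossing n k (G : {set arc n}) : bool :=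
  [&& is_digraph G, deg_le1 G & ~~ has_k_crossing k G].

Definition n_isolated n (G : {set arc n}) : nat :=
  #|[set v : 'I_n | [forall a in G, (a.1 != v) && (a.2 != v)]]|.

Definition no_one_arc_circ n (G : {set arc n}) : bool :=
  [forall a in G, (a.2 != a.1 .+1 :> nat) && ~~ ((a.1 == 0 :> nat) && (a.2 == n.-1 :> nat))].

Definition circ_RNA n k (G : {set arc n}) : bool :=
  k_noncrossing k G && no_one_arc_circ G.

Definition f_count k m l : nat :=
  #|[set G : {set arc m} | k_noncrossing k G && (n_isolated G == l)]|.

Definition Sc k n l : nat :=
  #|[set G : {set arc n} | circ_RNA k G && (n_isolated G == l)]|.

(* S^(c)_k(n) = sum_l S^(c)_k(n,l)  (terms with l > n vanish) *)
Definition Sc_total k n : nat := \sum_(l < n.+1) Sc k n l.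

(* binom((n-2)-(b-1), b-1) + binom(n-b, b), with binom(m,-1) = 0 *)
Definition coef n b : nat :=
  (if b is b'.+1 then 'C(n - 2 - b', b') else 0) + 'C(n - b, b).

(* Main.v *)
From Pilot Require Import Defs.
From mathcomp Require Import all_boot all_order all_algebra.
From mathcomp Require Import zify.
Import Pilot.Defs.
Set Implicit Arguments. Unset Strict Implicit. Unset Printing Implicit Defensive.

Definition cpat n k (f : 'I_k -> arc n) : bool :=
  [forall s : 'I_k, forall t : 'I_k,
       [&& (s < t)%N ==> ((f s).1 < (f t).1)%N && ((f s).2 < (f t).2)%N
         & ((f s).1 < (f t).2)%N]].

Lemma cpat_ext n k (f1 f2 : 'I_k -> arc n) : (forall t, f1 t = f2 t) -> cpat f1 = cpat f2.
Proof. by move=> e; rewrite /cpat; apply: eq_forallb => s; apply: eq_forallb => t; rewrite !e. Qed.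

Lemma hkcE n k (G : {set arc n}) :
  has_k_crossing k G = [exists f : {ffun 'I_k -> arc n}, [forall t, f t \in G] && cpat f].
Proof. by []. Qed.

Lemma degP n (G : {set arc n}) :
  reflect (forall a b, a \in G -> b \in G -> a != b ->
     [&& a.1 != b.1, a.1 != b.2, a.2 != b.1 & a.2 != b.2]) (deg_le1 G).
Proof.
apply: (iffP forall_inP) => H.
  by move=> a b aG bG ab; move/forall_inP: (H a aG) => /(_ b bG) /implyP; apply.
by move=> a aG; apply/forall_inP => b bG; apply/implyP; apply: H.
Qed.

Section Ins.
Variables (m k : nat).
Hypothesis hk : (2 <= k)%N.
Variables (sh : 'I_m -> 'I_m.+2) (p q : 'I_m.+2).
Hypothesis sh_mono : forall x y : 'I_m, (x < y)%N = (sh x < sh y)%N.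
Hypothesis shp : forall x, sh x != p.
Hypothesis shq : forall x, sh x != q.
Hypothesis pq : (p < q)%N.
Hypothesis hsur : forall v : 'I_m.+2, v != p -> v != q -> exists w, sh w = v.
Hypothesis hin : forall x y : 'I_m,
  ((p < sh x) && (sh x < q))%N = ((p < sh y) && (sh y < q))%N.

Lemma sh_inj : injective sh.
Proof. by move=> x y e; apply/val_inj; case: (ltngtP x y) => // h; move: h; rewrite sh_mono e ltnn. Qed.

Definition sha (a : arc m) : arc m.+2 := (sh a.1, sh a.2).

Lemma sha_inj : injective sha.
Proof. by move=> [a1 a2] [b1 b2] [/sh_inj -> /sh_inj ->]. Qed.

Lemma sha_pq a : (sha a == (p, q)) = false.
Proof. by rewrite /sha xpair_eqE (negbTE (shp _)). Qed.

Definition ins (G : {set arc m}) : {set arc m.+2} := sha @: G :|: [set (p, q)].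

Lemma mem_ins_sha G a : (sha a \in ins G) = (a \in G).
Proof. by rewrite !inE sha_pq orbF mem_imset //; apply: sha_inj. Qed.

Lemma pq_ins G : (p, q) \in ins G.
Proof. by rewrite !inE eqxx orbT. Qed.

Lemma ins_inj : injective ins.
Proof.
move=> G1 G2 e; apply/setP => a.
by rewrite -!mem_ins_sha e.
Qed.

Lemma dig_ins G : is_digraph (ins G) = is_digraph G.
Proof.
apply/forall_inP/forall_inP => H a.
  by move=> aG; have := H (sha a); rewrite mem_ins_sha /= -sh_mono; apply.
rewrite !inE => /orP [/imsetP [b bG ->] | /eqP ->] //.
by rewrite /= -sh_mono; apply: H.
Qed.

Lemma deg_ins G : deg_le1 (ins G) = deg_le1 G.
Proof.
apply/degP/degP => H.
  move=> a b aG bG ab.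
  have := H (sha a) (sha b); rewrite !mem_ins_sha /= !(inj_eq sh_inj).
  by apply => //; rewrite (inj_eq sha_inj).
move=> a b; rewrite !inE => /orP [/imsetP [a' aG ->] | /eqP ->]
  /orP [/imsetP [b' bG ->] | /eqP ->] //=.
- rewrite (inj_eq sha_inj) !(inj_eq sh_inj) => ab; exact: H.
- by rewrite !shp !shq.
- by rewrite ![p == _]eq_sym ![q == _]eq_sym !shp !shq.
- by rewrite eqxx.
Qed.

Lemma cpat_sha (f : 'I_k -> arc m) : cpat (fun t => sha (f t)) = cpat f.
Proof.
by rewrite /cpat; apply: eq_forallb => s; apply: eq_forallb => t; rewrite /= -!sh_mono.
Qed.

Lemma cross_ins G : has_k_crossing k (ins G) = has_k_crossing k G.
Proof.
rewrite !hkcE; apply/existsP/existsP => [[f /andP [/forallP fG cf]] | [f' /andP [/forallP fG cf]]].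
  have nopq : forall t, f t != (p, q).
    move=> t0; apply/eqP => ft0.
    have h0 : (0 < k)%N by lia.
    have h1 : (1 < k)%N by lia.
    have [s0 ns] : exists s0 : 'I_k, s0 != t0.
      case: (eqVneq t0 (Ordinal h0)) => [->|ne]; last by exists (Ordinal h0); rewrite eq_sym.
      by exists (Ordinal h1); apply/eqP => /(congr1 val).
    have P1 := forallP (forallP cf s0) t0.
    have P2 := forallP (forallP cf t0) s0.
    rewrite ft0 /= in P1 P2.
    move: (fG s0); rewrite !inE => /orP [/imsetP [a aG fs0] | /eqP fs0].
      rewrite fs0 /= in P1 P2.
      have hh := hin a.1 a.2.
      case: (ltngtP s0 t0) => st.
      + rewrite st /= in P1; rewrite (ltnNge t0 s0) (ltnW st) /= in P2.
        case/andP: P1 => /andP [h11 h12] _.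
        move: hh; rewrite P2 h12 /= => /andP [] ; lia.
      + rewrite st /= in P2; rewrite (ltnNge s0 t0) (ltnW st) /= in P1.
        case/andP: P2 => /andP [h21 h22] _.
        move: hh; rewrite P1 h21 /= => /esym /andP []; lia.
      + by move: ns; rewrite (val_inj st) eqxx.
    rewrite fs0 /= in P1 P2.
    case: (ltngtP s0 t0) => st.
    + by move: P1; rewrite st ltnn.
    + by move: P2; rewrite st ltnn.
    + by move: ns; rewrite (val_inj st) eqxx.
  have ex : forall t, exists a, (a \in G) && (sha a == f t).
    move=> t; move: (fG t); rewrite !inE (negbTE (nopq t)) orbF => /imsetP [a aG ->].
    by exists a; rewrite aG eqxx.
  have [g gP] := fin_all_exists ex.
  exists [ffun t => g t]; apply/andP; split.
    by apply/forallP => t; rewrite ffunE; case/andP: (gP t).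
  have e1 : cpat [ffun t => g t] = cpat g by apply: cpat_ext => t; rewrite ffunE.
  have e2 : cpat f = cpat (fun t => sha (g t)).
    by apply: cpat_ext => t; case/andP: (gP t) => _ /eqP ->.
  by rewrite e1 -cpat_sha -e2.
exists [ffun t => sha (f' t)]; apply/andP; split.
  by apply/forallP => t; rewrite ffunE mem_ins_sha.
by rewrite (cpat_ext (f2 := fun t => sha (f' t))) ?cpat_sha // => t; rewrite ffunE.
Qed.

Lemma knc_ins G : k_noncrossing k (ins G) = k_noncrossing k G.
Proof. by rewrite /k_noncrossing dig_ins deg_ins cross_ins. Qed.

Lemma iso_ins G : n_isolated (ins G) = n_isolated G.
Proof.
rewrite /n_isolated -(card_imset _ sh_inj).
apply: eq_card => v; rewrite inE; apply/idP/idP.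
  move/forall_inP => H.
  have /andP [vp _] := H _ (pq_ins G).
  have /andP [_ vq] := H _ (pq_ins G).
  have [w ew] : exists w, sh w = v by apply: hsur; rewrite eq_sym.
  subst v.
  rewrite mem_imset; last exact: sh_inj.
  rewrite inE; apply/forall_inP => a aG.
  by have := H (sha a); rewrite mem_ins_sha /= !(inj_eq sh_inj); apply.
case/imsetP => w; rewrite inE => /forall_inP H ->.
apply/forall_inP => a; rewrite !inE => /orP [/imsetP [b bG ->] | /eqP ->] /=.
  by rewrite !(inj_eq sh_inj); apply: H.
by rewrite ![p == _]eq_sym ![q == _]eq_sym shp shq.
Qed.

Lemma ins_count (R : pred (arc m.+2)) l : R (p, q) ->
  #|[set G | [&& k_noncrossing k G, n_isolated G == l, [forall a in G, R a] & (p, q) \in G]]| =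
  #|[set G' | [&& k_noncrossing k G', n_isolated G' == l & [forall a in G', R (sha a)]]]|.
Proof.
move=> Rpq; rewrite -(card_imset _ ins_inj).
apply: eq_card => G; rewrite inE; apply/idP/idP.
  case/and4P => kn iso fR pqG.
  set G' := [set a | sha a \in G].
  have eG : G = ins G'.
    apply/setP => a; case: (eqVneq a (p, q)) => [->|ne]; first by rewrite pqG pq_ins.
    rewrite !inE (negbTE ne) orbF; apply/idP/idP.
      move=> aG.
      case/and3P: kn => _ /degP dg _.
      case/and4P: (dg _ _ aG pqG ne) => /= a1p a1q a2p a2q.
      have [w1 e1] := hsur a1p a1q.
      have [w2 e2] := hsur a2p a2q.
      have -> : a = sha (w1, w2) by rewrite /sha /= e1 e2 -surjective_pairing.
      by rewrite mem_imset ?inE; [rewrite /sha /= e1 e2 -surjective_pairing | apply: sha_inj].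
    by case/imsetP => b; rewrite inE => bG ->.
  rewrite eG; apply/imsetP; exists G' => //.
  rewrite inE -knc_ins -iso_ins -eG kn iso /=.
  by apply/forall_inP => a; rewrite inE => aG; apply: (forall_inP fR).
case/imsetP => G'; rewrite inE => /and3P [kn iso fR] ->.
rewrite knc_ins iso_ins kn iso pq_ins /= andbT.
apply/forall_inP => a; rewrite !inE => /orP [/imsetP [b bG ->] | /eqP ->] //.
exact: (forall_inP fR).
Qed.

End Ins.

Ltac bdecide := repeat match goal with
 | |- context [(?a <= ?b)%N] => let H := fresh "H" in case: (leqP a b) => H
 | |- context [(?a == ?b :> nat)] => let H := fresh "H" in case: (a =P b) => H
 end; simpl; (done || (exfalso;
   repeat match goal with H : context [?n.-1] |- _ => move: H end;
   rewrite -?subn1; intros; lia)).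

Definition Rj n j (a : arc n) : bool := (a.2 != (a.1).+1 :> nat) || (j <= a.1)%N.

Definition Pc k n j l :=
  #|[set G : {set arc n} | [&& k_noncrossing k G, n_isolated G == l & [forall a in G, Rj j a]]]|.

Lemma card_split (T : finType) (X Y : pred T) :
  #|[set x | X x]| = (#|[set x | X x && Y x]| + #|[set x | X x && ~~ Y x]|)%N.
Proof.
rewrite -(cardsID [set x | Y x] [set x | X x]); congr addn;
  by apply: eq_card => x; rewrite !inE andbC.
Qed.

Lemma forall_split n (G : {set arc n}) (R : pred (arc n)) e :
  [forall a in G, R a && (a != e)] = [forall a in G, R a] && (e \notin G).
Proof.
apply/forall_inP/andP => [H|[/forall_inP H eG] a aG].
  split; first by apply/forall_inP => a /H /andP [].
  by apply/negP => /H; rewrite eqxx andbF.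
rewrite H //=; apply: contraNneq eG => <-; done.
Qed.

Lemma P0 k n l : Pc k n 0 l = f_count k n l.
Proof.
rewrite /Pc /f_count; apply: eq_card => G; rewrite !inE.
have -> : [forall a in G, Rj 0 a] by apply/forall_inP => a _; rewrite /Rj orbT.
by rewrite andbT.
Qed.

Lemma f_count_big k m l : (m < l)%N -> f_count k m l = 0%N.
Proof.
move=> ml; apply/eqP; rewrite cards_eq0; apply/eqP/setP => G; rewrite !inE.
apply/negbTE; rewrite negb_and; apply/orP; right.
have : (n_isolated G <= m)%N by rewrite /n_isolated -[X in (_ <= X)%N]card_ord max_card.
by move=> h; apply/eqP => e; move: h; rewrite e; lia.
Qed.

Definition shl m j (v : 'I_m) : 'I_m.+2 := inord (if (v < j)%N then (v : nat) else (v : nat).+2).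

Lemma shl_val m j v : (@shl m j v : nat) = if (v < j)%N then (v : nat) else (v : nat).+2.
Proof. by rewrite inordK //; have := ltn_ord v; case: ifP => _; lia. Qed.

Lemma P_rec k n j l : (2 <= k)%N -> (j.+1 < n)%N ->
  Pc k n j l = (Pc k n j.+1 l + Pc k (n - 2) j.-1 l)%N.
Proof.
move=> hk; case: n => [|[|m]] //= hj.
rewrite subn2 /=.
pose p : 'I_m.+2 := inord j.
pose q : 'I_m.+2 := inord j.+1.
have pv : (p : nat) = j by rewrite inordK //; lia.
have qv : (q : nat) = j.+1 by rewrite inordK //; lia.
rewrite /Pc [LHS](card_split _ (fun G : {set arc m.+2} => (p, q) \in G)) addnC.
congr (_ + _)%N.
  apply: eq_card => G; rewrite !inE.
  have -> : [forall a in G, Rj j.+1 a] = [forall a in G, Rj j a] && ((p, q) \notin G).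
    rewrite -forall_split; apply: eq_forallb_in => a _.
  case: a => x y; rewrite /Rj xpair_eqE /= -!val_eqE /= pv qv.
  case: (nat_of_ord y =P (nat_of_ord x).+1) => ?; case: (nat_of_ord x =P j) => ?;
    case: (nat_of_ord y =P j.+1) => ?;
    case: (leqP j.+1 x) => ?; case: (leqP j x) => ? /=; (done || (exfalso; lia)).
  by rewrite !andbA.
have shm : forall x y : 'I_m, (x < y)%N = (shl j x < shl j y)%N.
  move=> x y; rewrite !shl_val; case: (ltnP x j) => ?; case: (ltnP y j) => ?;
    apply/idP/idP; lia.
have shp : forall x, shl j x != p.
  by move=> x; apply/eqP => /(congr1 (@nat_of_ord _)); rewrite shl_val pv; case: ifP; lia.
have shq : forall x, shl j x != q.
  by move=> x; apply/eqP => /(congr1 (@nat_of_ord _)); rewrite shl_val qv; case: ifP; lia.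
have pq : (p < q)%N by rewrite pv qv.
have hsur : forall v : 'I_m.+2, v != p -> v != q -> exists w, shl j w = v.
  move=> v vp vq.
  have vp' : (v : nat) != j by rewrite -pv val_eqE.
  have vq' : (v : nat) != j.+1 by rewrite -qv val_eqE.
  have hw : ((if (v < j)%N then v : nat else (v : nat) - 2) < m)%N.
    by have := ltn_ord v; case: ifP; lia.
  exists (Ordinal hw); apply/val_inj; rewrite /= shl_val /=.
  by case: (ltnP v j) => ?; case: ifP; lia.
have hin0 : forall x : 'I_m, ((p < shl j x) && (shl j x < q))%N = false.
  by move=> x; rewrite pv qv; apply: negbTE; apply/negP => /andP []; lia.
have hin : forall x y : 'I_m,
   ((p < shl j x) && (shl j x < q))%N = ((p < shl j y) && (shl j y < q))%N.
  by move=> x y; rewrite !hin0.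
have Rpq : Rj j (p, q) by rewrite /Rj /= pv leqnn orbT.
rewrite (_ : #|[set x : {set arc m.+2} | _ && ((p, q) \in x)]| = #|[set G | [&& k_noncrossing k G,
   n_isolated G == l, [forall a in G, Rj j a] & (p, q) \in G]]|);
  last by apply: eq_card => G; rewrite !inE -!andbA.
rewrite (ins_count hk shm shp shq pq hsur hin l Rpq).
apply: eq_card => G; rewrite !inE.
case kn : (k_noncrossing k G) => //=; congr (_ && _).
case/and3P: kn => /forall_inP dig _ _.
apply: eq_forallb_in => a /dig; case: a => x y /= xy.
rewrite /Rj /sha /= !shl_val.
bdecide.
Qed.

Definition shc m (v : 'I_m) : 'I_m.+2 := inord (v : nat).+1.

Lemma shc_val m v : (@shc m v : nat) = (v : nat).+1.
Proof. by rewrite inordK //; have := ltn_ord v; lia. Qed.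

Lemma Sc_rec k m l : (2 <= k)%N -> (1 <= m)%N ->
  (Sc k m.+2 l + Pc k m m.-1 l)%N = Pc k m.+2 m.+1 l.
Proof.
move=> hk hm.
pose p : 'I_m.+2 := inord 0.
pose q : 'I_m.+2 := inord m.+1.
have pv : (p : nat) = 0%N by rewrite inordK.
have qv : (q : nat) = m.+1 by rewrite inordK.
rewrite /Pc [RHS](card_split _ (fun G : {set arc m.+2} => (p, q) \in G)) addnC.
congr addn; last first.
  apply: eq_card => G; rewrite !inE /circ_RNA -!andbA.
  have -> : no_one_arc_circ G = [forall a in G, Rj m.+1 a] && ((p, q) \notin G).
    rewrite -forall_split; apply: eq_forallb_in => a _.
    case: a => x y; rewrite /Rj xpair_eqE /= -!val_eqE /= pv qv.
    have hx := ltn_ord x; have hy := ltn_ord y.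
    bdecide.
  by case: (is_digraph G); case: (deg_le1 G); case: (has_k_crossing k G);
    case: (n_isolated G == l); case: [forall a in G, Rj m.+1 a]; case: ((p, q) \in G).
have shm : forall x y : 'I_m, (x < y)%N = (shc x < shc y)%N.
  by move=> x y; rewrite !shc_val.
have shp : forall x, shc x != p.
  by move=> x; apply/eqP => /(congr1 (@nat_of_ord _)); rewrite shc_val pv.
have shq : forall x, shc x != q.
  by move=> x; apply/eqP => /(congr1 (@nat_of_ord _)); rewrite shc_val qv; have := ltn_ord x; lia.
have pq : (p < q)%N by rewrite pv qv.
have hsur : forall v : 'I_m.+2, v != p -> v != q -> exists w, shc w = v.
  move=> v vp vq.
  have vp' : (v : nat) != 0%N by apply: contra vp => /eqP e; apply/eqP/val_inj; rewrite /= e pv.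
  have vq' : (v : nat) != m.+1 by apply: contra vq => /eqP e; apply/eqP/val_inj; rewrite /= e qv.
  have hw : ((v : nat) - 1 < m)%N by have := ltn_ord v; lia.
  exists (Ordinal hw); apply/val_inj; rewrite /= shc_val /=; lia.
have hin1 : forall x : 'I_m, ((p < shc x) && (shc x < q))%N = true.
  by move=> x; rewrite pv qv shc_val; have := ltn_ord x; lia.
have hin : forall x y : 'I_m,
   ((p < shc x) && (shc x < q))%N = ((p < shc y) && (shc y < q))%N.
  by move=> x y; rewrite !hin1.
have Rpq : Rj m.+1 (p, q) by rewrite /Rj /= pv qv; lia.
rewrite (_ : #|[set x : {set arc m.+2} | _ && ((p, q) \in x)]| = #|[set G | [&& k_noncrossing k G,
   n_isolated G == l, [forall a in G, Rj m.+1 a] & (p, q) \in G]]|);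
  last by apply: eq_card => G; rewrite !inE -!andbA.
rewrite (ins_count hk shm shp shq pq hsur hin l Rpq).
apply: eq_card => G; rewrite !inE.
case kn : (k_noncrossing k G) => //=; congr (_ && _).
case/and3P: kn => /forall_inP dig _ _.
apply: eq_forallb_in => a /dig; case: a => x y /= xy.
rewrite /Rj /sha /= !shc_val.
have hx := ltn_ord x; have hy := ltn_ord y.
bdecide.
Qed.

From mathcomp Require Import ring.
Import GRing.Theory Num.Theory.
Local Open Scope ring_scope.

Lemma binid j b : 'C(j.+2 - b.+1, b.+1) = ('C(j.+1 - b.+1, b.+1) + 'C(j.-1.+1 - b, b))%N.
Proof.
rewrite !subSS; case: (leqP b j) => h.
  rewrite subSn // binS; congr addn.
  by case: j h => [|j] h //=; rewrite leqn0 in h; move/eqP: h => ->.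
have e1 : (j.+1 - b = 0)%N by lia.
have e2 : (j - b = 0)%N by lia.
have e3 : (j.-1.+1 - b = 0)%N by case: j h {e1 e2} => [|j] /= h; lia.
by rewrite e1 e2 e3 !bin0n; case: b h {e1 e2 e3}.
Qed.

Lemma Pform k l : (2 <= k)%N -> forall j n, (j == 0)%N || (j < n)%N -> forall M, (j.+2 <= M)%N ->
  (Pc k n j l)%:Z = \sum_(0 <= b < M) (-1) ^+ b * ('C(j.+1 - b, b))%:Z * (f_count k (n - 2 * b) l)%:Z.
Proof.
move=> hk; elim/ltn_ind => j IH n hj M hM.
case: M hM => [//|M] hM.
case: j IH hj hM => [|j] IH hj hM.
  rewrite big_nat_recl // expr0 !subn0 bin0 ?muln0 ?subn0 !mul1r.
  rewrite P0 big1_seq ?addr0 // => b _.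
  by rewrite subSS sub0n bin0n /= mulr0 mul0r.
have hjn : (j.+1 < n)%N by move: hj => /=.
have := P_rec l hk hjn; move/(congr1 Posz); rewrite PoszD => ePj.
have -> : (Pc k n j.+1 l)%:Z = (Pc k n j l)%:Z - (Pc k (n - 2)%N j.-1 l)%:Z.
  by rewrite ePj addrK.
rewrite (IH j (ltnSn _) n _ M.+1); last by lia.
  2: by apply/orP; right; lia.
rewrite (IH j.-1 _ (n - 2)%N _ M); first last.
- by lia.
- by case: j hj hjn {IH ePj hM} => [|j] //= _ hjn; apply/orP; right; lia.
- by case: j {IH ePj hM hj hjn} => [|j] //=; lia.
rewrite !big_nat_recl // !expr0 !subn0 !bin0 ?muln0 ?subn0 !mul1r.
rewrite -addrA; congr (_ + _).
rewrite -sumrB; apply: eq_bigr => b _.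
rewrite binid PoszD (_ : (n - 2 * b.+1 = n - 2 - 2 * b)%N); last by lia.
rewrite exprS; ring.
Qed.

Lemma Scform k n l : (2 <= k)%N -> (3 <= n)%N ->
  (Sc k n l)%:Z = \sum_(0 <= b < n.+1) (-1) ^+ b * (coef n b)%:Z * (f_count k (n - 2 * b) l)%:Z.
Proof.
move=> hk; case: n => [|[|m]] // hm.
have hm1 : (1 <= m)%N by lia.
have := Sc_rec l hk hm1; move/(congr1 Posz); rewrite PoszD => e.
have -> : (Sc k m.+2 l)%:Z = (Pc k m.+2 m.+1 l)%:Z - (Pc k m m.-1 l)%:Z by rewrite -e addrK.
rewrite (Pform l hk (j := m.+1) (n := m.+2) _ (M := m.+3)) //; last by rewrite ltnSn orbT.
rewrite (Pform l hk (j := m.-1) (n := m) _ (M := m.+2)); first last.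
- by rewrite prednK.
- by apply/orP; right; rewrite prednK.
rewrite [RHS]big_nat_recl // [in LHS]big_nat_recl // !expr0 !subn0 !bin0 ?muln0 ?subn0 !mul1r /coef /=.
rewrite -addrA; congr (_ + _).
rewrite -sumrB; apply: eq_bigr => b _.
rewrite prednK // (_ : (m.+2 - 2 * b.+1 = m - 2 * b)%N); last by lia.
rewrite (_ : (m.+2 - 2 - b = m - b)%N); last by lia.
rewrite PoszD exprS; ring.
Qed.

Lemma coef0 n b : (3 <= n)%N -> (n < 2 * b)%N -> coef n b = 0%N.
Proof.
case: b => [|b] h1 h2; first by lia.
by rewrite /coef !bin_small //; lia.
Qed.

Lemma Scform2 k n l : (2 <= k)%N -> (3 <= n)%N ->
  (Sc k n l)%:Z = \sum_(0 <= b < (n./2).+1) (-1) ^+ b * (coef n b)%:Z * (f_count k (n - 2 * b) l)%:Z.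
Proof.
move=> hk hn; rewrite Scform //.
rewrite (big_cat_nat _ (n := (n./2).+1)) //=; last by rewrite -divn2; lia.
rewrite [X in _ + X]big_nat_cond [X in _ + X]big1 ?addr0 // => b /andP [/andP [hb _] _].
by rewrite coef0 // ?mulr0 ?mul0r //; move: hb; rewrite -divn2; lia.
Qed.

Theorem theorem3p5 (k n : nat) (hk : (2 <= k)%N) (hn : (3 <= n)%N) :
  (forall l : nat,
     (Sc k n l)%:Z =
     \sum_(0 <= b < ((n - l)./2).+1)
        (-1) ^+ b * (coef n b)%:Z * (f_count k (n - 2 * b) l)%:Z) /\
  (Sc_total k n)%:Z =
     \sum_(0 <= b < (n./2).+1)
        (-1) ^+ b * (coef n b)%:Z *
        (\sum_(0 <= l < (n - 2 * b).+1) f_count k (n - 2 * b) l)%:Z.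
Proof.
split.
  move=> l; rewrite Scform //.
  rewrite (big_cat_nat _ (n := ((n - l)./2).+1)) //=; last by rewrite -divn2; lia.
  rewrite [X in _ + X]big_nat_cond [X in _ + X]big1 ?addr0 // => b /andP [/andP [hb _] _].
  case: (ltnP n (2 * b)) => h; first by rewrite coef0 // mulr0 mul0r.
  rewrite f_count_big ?mulr0 //; move: hb; rewrite -divn2; lia.
rewrite /Sc_total (big_morph Posz PoszD (erefl _)).
rewrite (eq_bigr (fun l : 'I_n.+1 => \sum_(0 <= b < (n./2).+1)
   (-1) ^+ b * (coef n b)%:Z * (f_count k (n - 2 * b) l)%:Z)); last first.
  by move=> l _; rewrite Scform2.
rewrite exchange_big /=; apply: eq_bigr => b _.
rewrite -mulr_sumr; congr (_ * _).
rewrite (big_morph Posz PoszD (erefl _)) -(big_mkord xpredT (fun l => (f_count k (n - 2 * b) l)%:Z)).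
rewrite (big_cat_nat _ (n := (n - 2 * b).+1)) //=; last by lia.
rewrite [X in _ + X]big_nat_cond [X in _ + X]big1 ?addr0 // => l /andP [/andP [hl _] _].
by rewrite f_count_big.
Qed.
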